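(* Let $X$ be a Banach space, $H$ a Hilbert space, $T\in\mathcal L(X,H)$, $f\in H$, $J$ a seminorm on $X$ such that all Tikhonov functionals below have minimizers, and $(\lambda_k)\subset(0,\infty)$. Let $x_k$ be the MHDM iterates and $x_{\lambda_k}$ any minimizer of $x\mapsto\frac{\lambda_k}{2}\|Tx-f\|^2+J(x)$. Then for every $k\in\mathbb N_0$, $$|T^*T(x_{\lambda_k}-x_k)|_*\le\frac{2}{\lambda_k}.$$
   Context: Seminorm: $J:X\to[0,\infty]$ with $J(\alpha x)=|\alpha|J(x)$, $J(x+y)\le J(x)+J(y)$. Dual seminorm: for $x^*\in X^*$, $|x^*|_*=\sup_{J(x)\ne0}\langle x^*,x/J(x)\rangle$, with the convention $x/J(x)=0$ if $J(x)=\infty$. MHDM: $x_0\in\arg\min_x\frac{\lambda_0}{2}\|Tx-f\|^2+J(x)$, and for $k\ge1$, $x_k\in\arg\min_x\frac{\lambda_k}{2}\|Tx-f\|^2+J(x-x_{k-1})$ (equivalently $x_k=x_{k-1}+u_k$ with $u_k\in\arg\min_u\frac{\lambda_k}{2}\|f-Tx_{k-1}-Tu\|^2+J(u)$). *)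

(* Defs.v *)
From HB Require Import structures.
From mathcomp Require Import all_boot all_order all_algebra.
From mathcomp Require Import all_classical all_reals all_analysis.
Set Implicit Arguments. Unset Strict Implicit. Unset Printing Implicit Defensive.
Import Order.TTheory GRing.Theory Num.Theory.
Import numFieldNormedType.Exports.
Local Open Scope classical_set_scope.
Local Open Scope ring_scope.

(* A (real) inner product [ip] on a normed space H inducing its norm:
   together with completeness of H this makes H a Hilbert space. *)
Definition is_inner_product (R : realType) (H : normedModType R)
  (ip : H -> H -> R) : Prop :=
  [/\ (forall u v, ip u v = ip v u),
      (forall a u v w, ip (a *: u + v) w = a * ip u w + ip v w)
    & (forall u, `|u| ^+ 2 = ip u u)].

Definition is_seminorm (R : realType) (X : normedModType R)
  (J : X -> \bar R) : Prop :=
  [/\ (forall x, (0 <= J x)%E),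
      (forall (a : R) x, J (a *: x) = (`|a|%:E * J x)%E)
    & (forall x y, (J (x + y)%R <= J x + J y)%E)].

(* Dual seminorm of a functional phi (an element of X^* ):
   |phi|_* = sup_{J x <> 0} phi (x / J x), with x / J x := 0 if J x = +oo. *)
Definition dual_seminorm (R : realType) (X : normedModType R)
  (J : X -> \bar R) (phi : X -> R) : \bar R :=
  ereal_sup [set (if J x == +oo%E then phi 0 else phi ((fine (J x))^-1 *: x))%:E
            | x in [set x | J x != 0%E]].

Definition tikh (R : realType) (X H : normedModType R) (T : X -> H) (f : H)
  (J : X -> \bar R) (lam : R) (z x : X) : \bar R :=
  ((lam / 2 * `|T x - f| ^+ 2)%:E + J (x - z)%R)%E.

Definition is_minimizer (R : realType) (X : Type) (F : X -> \bar R) (x : X) : Prop :=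
  forall y, (F x <= F y)%E.

Definition is_MHDM (R : realType) (X H : normedModType R) (T : X -> H) (f : H)
  (J : X -> \bar R) (lam : nat -> R) (x : nat -> X) : Prop :=
  is_minimizer (tikh T f J (lam 0%N) 0) (x 0%N) /\
  forall k, is_minimizer (tikh T f J (lam k.+1) (x k)) (x k.+1).

(* Main.v *)
Require Import Defs.
From HB Require Import structures.
From mathcomp Require Import all_boot all_order all_algebra.
From mathcomp Require Import all_classical all_reals all_analysis.
From mathcomp Require Import ring lra.
Import Order.TTheory GRing.Theory Num.Theory.
Import numFieldNormedType.Exports.
Local Open Scope classical_set_scope.
Local Open Scope ring_scope.

Set Implicit Arguments. Unset Strict Implicit.
Section Helpers.
Variables (R : realType) (H : normedModType R) (ip : H -> H -> R).
Hypothesis ipH : is_inner_product ip.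

Lemma ipC u v : ip u v = ip v u.
Proof. by case: ipH. Qed.
Lemma ipL a u v w : ip (a *: u + v) w = a * ip u w + ip v w.
Proof. by case: ipH. Qed.
Lemma ipN2 u : `|u| ^+ 2 = ip u u.
Proof. by case: ipH. Qed.
Lemma ip0l u : ip 0 u = 0.
Proof. have := ipL 1 0 0 u; rewrite scaler0 addr0 mul1r => h; lra. Qed.
Lemma ipDl u v w : ip (u + v) w = ip u w + ip v w.
Proof. by have := ipL 1 u v w; rewrite scale1r mul1r. Qed.
Lemma ipZl a u w : ip (a *: u) w = a * ip u w.
Proof. by have := ipL a u 0 w; rewrite !addr0 ip0l addr0. Qed.
Lemma ipNl u w : ip (- u) w = - ip u w.
Proof. by rewrite -scaleN1r ipZl mulN1r. Qed.
Lemma ipBl u v w : ip (u - v) w = ip u w - ip v w.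
Proof. by rewrite ipDl ipNl. Qed.
Lemma ipNr u w : ip u (- w) = - ip u w.
Proof. by rewrite ipC ipNl ipC. Qed.
Lemma ipZr a u w : ip u (a *: w) = a * ip u w.
Proof. by rewrite ipC ipZl ipC. Qed.
Lemma ip_expand u w (t : R) :
  ip (u + t *: w) (u + t *: w) = ip u u + 2 * t * ip u w + t ^+ 2 * ip w w.
Proof.
rewrite ipDl (ipC u) (ipC (t *: w)) !ipDl !ipZl !ipZr (ipC w u); ring.
Qed.
End Helpers.

Lemma opt_ineq (R : realType) (X H : normedModType R)
  (ip : H -> H -> R) (ipH : is_inner_product ip)
  (T : {linear X -> H}) (f : H) (J : X -> \bar R) (HJ : is_seminorm J)
  (lam : R) (lpos : 0 < lam) (z xm : X)
  (Hm : is_minimizer (tikh T f J lam z) xm) (y : X) (c : R)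
  (Hc : J y = c%:E) : lam * ip (f - T xm) (T y) <= c.
Proof.
case: HJ => Jge0 JZ JD.
have J0 : J 0 = 0%E by have := JZ 0 0; rewrite scale0r normr0 mul0e.
have Hz := Hm z; rewrite /tikh subrr J0 adde0 in Hz.
have [j Hj] : exists j, J (xm - z) = j%:E.
  move: Hz (Jge0 (xm - z)); case: (J (xm - z)) => [j| |] //.
  by move=> _ _; exists j.
set u := T xm - f; set w := T y.
have key : forall t : R, 0 < t -> 0 <= lam * ip u w + c + t * (lam / 2 * ip w w).
  move=> t t0.
  have Ht := Hm (xm + t *: y)%R; rewrite /tikh Hj in Ht.
  have Eq : xm + t *: y - z = (xm - z) + t *: y by rewrite addrAC.
  have HJt : (J (xm + t *: y - z)%R <= (j + t * c)%:E)%E.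
    rewrite Eq; apply: le_trans (JD _ _) _.
    by rewrite JZ Hc Hj gtr0_norm // -EFinM -EFinD.
  have Ht2 := le_trans Ht (leeD2l _ HJt).
  rewrite -!EFinD lee_fin in Ht2.
  have ET : T (xm + t *: y) - f = u + t *: w by rewrite linearD linearZ /= addrAC.
  rewrite ET !(ipN2 ipH) -/u /= in Ht2.
  rewrite (ip_expand ipH) in Ht2.
  have : 0 <= t * (lam * ip u w + c + t * (lam / 2 * ip w w)) by nra.
  by rewrite pmulr_rge0.
have wpos : 0 <= ip w w by rewrite -(ipN2 ipH) exprn_ge0.
have Ef : ip (f - T xm) w = - ip u w by rewrite -(ipNl ipH) opprB.
rewrite Ef.
set a := lam * ip u w + c; set b := lam / 2 * ip w w.
have b0 : 0 <= b by rewrite /b mulr_ge0 // divr_ge0 // ltW.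
suff : 0 <= a by rewrite /a; lra.
rewrite leNgt; apply/negP => a0.
pose t := - a / (2 * (b + 1)).
have tdef : t * (2 * (b + 1)) = - a by rewrite /t mulfVK // mulf_neq0 // gt_eqF // ltr_wpDl.
have t0 : 0 < t by rewrite /t divr_gt0 ?oppr_gt0 // mulr_gt0 // ltr_wpDl.
have e : 2 * (t * b) + 2 * t = - a by rewrite -tdef; ring.
have := key t t0; rewrite -/b -/a; lra.
Qed.

Unset Implicit Arguments.
Theorem mainTheorem9 (R : realType) (X H : completeNormedModType R)
  (ip : H -> H -> R) (ipH : is_inner_product ip)
  (T : {linear X -> H}) (Tcont : continuous T) (f : H)
  (J : X -> \bar R) (HJ : is_seminorm J)
  (lam : nat -> R) (lam_pos : forall k, 0 < lam k)
  (x : nat -> X) (Hx : is_MHDM T f J lam x)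
  (xlam : nat -> X) (Hxlam : forall k, is_minimizer (tikh T f J (lam k) 0) (xlam k)) :
  forall k : nat,
    (dual_seminorm J (fun y => ip (T (xlam k - x k)%R) (T y)) <= (2 / lam k)%:E)%E.
Proof.
move=> k.
have lk := lam_pos k.
have [z Hz] : exists z, is_minimizer (tikh T f J (lam k) z) (x k).
  by case: Hx => H0 HS; case: k {lk} => [|k]; [exists 0 | exists (x k)].
apply: ge_ereal_sup => _ [v /= Hv <-].
have HJ' := HJ; case: HJ' => Jge0 JZ JD.
case: ifP => Hinf.
  by rewrite linear0 (ipC ipH) (ip0l ipH) lee_fin divr_ge0 // ltW.
have [r Hr] : exists r, J v = r%:E.
  move: Hinf Hv (Jge0 v); case: (J v) => [r| |] //; by exists r.
have r0 : 0 < r by move: Hv (Jge0 v); rewrite Hr lee_fin eqe lt_def => -> ->.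
rewrite Hr /=; set y := r^-1 *: v.
have Jy : J y = 1%:E by rewrite /y JZ Hr -EFinM gtr0_norm ?invr_gt0 // mulVf // gt_eqF.
have Jny : J (- y) = 1%:E by rewrite -scaleN1r JZ normrN normr1 mul1e.
have h1 := opt_ineq ipH HJ lk Hz Jy.
have h2 := opt_ineq ipH HJ lk (Hxlam k) Jny.
rewrite linearN (ipNr ipH) !(ipBl ipH) in h2.
rewrite !(ipBl ipH) in h1.
rewrite lee_fin linearB (ipBl ipH) ler_pdivlMr //.
nra.
Qed.
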